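(* (i) Let $G$ be a $4$-connected simple triangulation of order $n$. Then \[ \rho(G) \le \frac{n+3}{8} + \varepsilon_n, \] where $\varepsilon_n = 0$ if $n\equiv 1 \pmod 4$, $\varepsilon_n = \frac{3}{8(n-1)}$ if $n \equiv 0,2 \pmod 4$, and $\varepsilon_n = \frac{1}{2(n-1)}$ if $n\equiv 3\pmod 4$. (ii) Let $G$ be a simple quadrangulation of order $n$. Then \[ \rho(G) \le \frac{n+1}{4} + \varepsilon_n, \] where $\varepsilon_n = 0$ if $n$ is odd and $\varepsilon_n = \frac{1}{4(n-1)}$ if $n$ is even.
   Context: A simple triangulation is a plane graph without loops or multiple edges in which every face (including the outer face) is bounded by a triangle; a simple quadrangulation is a plane graph without loops or multiple edges in which every face is bounded by a $4$-cycle. A graph is $k$-connected if it has more than $k$ vertices and remains connected after deleting any fewer than $k$ vertices. For a connected graph $G$ of order $n\ge 2$ and a vertex $v$, let $\sigma(v)=\sum_{u\in V(G)} d_G(u,v)$ be the total distance of $v$ ($d_G$ the usual shortest-path distance), $\overline{\sigma}(v) = \sigma(v)/(n-1)$, and the remoteness $\rho(G) = \max_{v\in V(G)} \overline{\sigma}(v)$. *)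

(* Defs.v *)
From HB Require Import structures.
From mathcomp Require Import all_boot all_order all_algebra.
Set Implicit Arguments. Unset Strict Implicit. Unset Printing Implicit Defensive.
Import Order.TTheory GRing.Theory Num.Theory.

(* simple graph: no loops, undirected (hence no multiple edges) *)
Definition simple_graph (T : finType) (e : rel T) : Prop :=
  symmetric e /\ irreflexive e.

Definition connected_graph (T : finType) (e : rel T) : Prop :=
  forall x y : T, connect e x y.

Definition k_connected (T : finType) (e : rel T) (k : nat) : Prop :=
  k < #|T| /\
  forall S : {set T}, #|S| < k ->
    forall x y : T, x \notin S -> y \notin S ->
      connect [rel a b | [&& e a b, a \notin S & b \notin S]] x y.

(* rot u is a cyclic ordering of the neighbours of u *)
Definition rotation_system (T : finType) (e : rel T) (rot : T -> T -> T) : Prop :=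
  forall u v, e u v ->
    e u (rot u v) /\ (forall w, e u w -> fconnect (rot u) v w).

Definition darts (T : finType) (e : rel T) : {set T * T} :=
  [set d | e d.1 d.2].

(* face permutation: traverse dart (u,v), then turn at v *)
Definition face_perm (T : finType) (rot : T -> T -> T) (d : T * T) : T * T :=
  (d.2, rot d.2 d.1).

Definition faces (T : finType) (e : rel T) (rot : T -> T -> T) : {set {set T * T}} :=
  [set [set d' | fconnect (face_perm rot) d d'] | d in darts e].

(* the rotation system describes a cellular embedding of the connected graph
   in the sphere: Euler's formula V - E + F = 2 (genus 0), with E = #darts/2 *)
Definition plane_embedding (T : finType) (e : rel T) (rot : T -> T -> T) : Prop :=
  [/\ rotation_system e rot, connected_graph e &
      2 * #|T| + 2 * #|faces e rot| = #|darts e| + 4].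

Definition faces_are_cycles (T : finType) (e : rel T) (rot : T -> T -> T) (k : nat) : Prop :=
  forall f, f \in faces e rot -> #|f| = k /\ #|[set d.1 | d in f]| = k.

Definition simple_triangulation (T : finType) (e : rel T) : Prop :=
  simple_graph e /\ exists rot, plane_embedding e rot /\ faces_are_cycles e rot 3.

Definition simple_quadrangulation (T : finType) (e : rel T) : Prop :=
  simple_graph e /\ exists rot, plane_embedding e rot /\ faces_are_cycles e rot 4.

Fixpoint nwalk (T : finType) (e : rel T) (n : nat) (u v : T) : bool :=
  match n with
  | 0 => u == v
  | n'.+1 => [exists w, e u w && nwalk e n' w v]
  end.

(* shortest-path distance: least n with a walk of length n (for a connected
   graph such an n < #|T| exists) *)
Definition dist (T : finType) (e : rel T) (u v : T) : nat :=
  find (fun n => nwalk e n u v) (iota 0 #|T|).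

Definition sigma (T : finType) (e : rel T) (v : T) : nat :=
  \sum_(u : T) dist e u v.

(* remoteness: max over v of sigma(v)/(n-1) (all values are >= 0) *)
Definition remoteness (T : finType) (e : rel T) : rat :=
  \big[Num.max/0%R]_(v : T) ((sigma e v)%:R / (#|T|.-1)%:R)%R.

Local Open Scope ring_scope.

Definition eps_tri (n : nat) : rat :=
  if (n %% 4 == 1)%N then 0
  else if (n %% 4 == 3)%N then 1 / (2 * (n.-1)%:R)
  else 3 / (8 * (n.-1)%:R).

Definition eps_quad (n : nat) : rat :=
  if odd n then 0 else 1 / (4 * (n.-1)%:R).

(* Main.v *)
Require Import Defs.
From HB Require Import structures.
From mathcomp Require Import all_boot all_order all_algebra.
From mathcomp Require Import zify ring lra.
Set Implicit Arguments. Unset Strict Implicit. Unset Printing Implicit Defensive.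
Import Order.TTheory GRing.Theory Num.Theory.

Section Dist.
Variables (T : finType) (e : rel T) (v : T).
Hypothesis esym : symmetric e.
Hypothesis eirr : irreflexive e.
Hypothesis econn : connected_graph e.

Local Notation D u := (dist e u v).

Lemma dist_le k u : nwalk e k u v -> D u <= k.
Proof.
move=> hk; rewrite /dist.
case: (ltnP k #|T|) => hkn; last first.
  by apply: leq_trans (find_size _ _) _; rewrite size_iota.
rewrite leqNgt; apply/negP => hlt.
have := before_find 0 hlt; rewrite nth_iota //= add0n hk //.
Qed.

Lemma nwalk_path x p : path e x p -> nwalk e (size p) x (last x p).
Proof.
elim: p x => [|y p IH] x /=; first by rewrite eqxx.
move=> /andP [hxy hp]; apply/existsP; exists y; rewrite hxy /=; exact: IH.
Qed.

Lemma dist_walk u : nwalk e (D u) u v.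
Proof.
have: exists2 k, k < #|T| & nwalk e k u v.
  have /connectP [p hp ->] := econn u v.
  case/shortenP: hp => p' hp' hu _.
  exists (size p'); last exact: nwalk_path.
  have := max_card (mem (u :: p')); rewrite (card_uniqP hu) //.
case=> k hk hw.
have hh : has (fun n => nwalk e n u v) (iota 0 #|T|).
  by apply/hasP; exists k => //; rewrite mem_iota.
have hf : find (fun n => nwalk e n u v) (iota 0 #|T|) < #|T|.
  by rewrite -{2}(size_iota 0 #|T|) -has_find.
by have := nth_find 0 hh; rewrite /dist nth_iota ?add0n.
Qed.

Lemma dist_leT u : D u <= #|T|.
Proof. by apply: leq_trans (find_size _ _) _; rewrite size_iota. Qed.

Lemma dist_v : D v = 0.
Proof. by apply/eqP; rewrite -leqn0; apply: dist_le; rewrite /= eqxx. Qed.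

Lemma dist0 u : D u = 0 -> u = v.
Proof. by move=> h; have := dist_walk u; rewrite h /= => /eqP. Qed.

Lemma dist_adj a b : e a b -> D a <= (D b).+1.
Proof.
move=> hab; apply: dist_le => /=; apply/existsP; exists b.
by rewrite hab dist_walk.
Qed.

Lemma dist_down u k : D u = k.+1 -> exists w, e u w /\ D w = k.
Proof.
move=> h; have := dist_walk u; rewrite h /= => /existsP [w /andP [huw hw]].
exists w; split => //; apply/eqP; rewrite eqn_leq dist_le //=.
by have := dist_adj huw; rewrite h.
Qed.

Lemma dist_level u k : k <= D u -> exists w, D w = k.
Proof.
move=> hk; have [n hn] : exists n, D u = n by eexists.
rewrite hn in hk; elim: n u hn hk => [|n IH] u hu hk.
  by exists u; rewrite hu; move: hk; rewrite leqn0 => /eqP.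
case: (ltngtP k n.+1) hk => // [hlt _|-> _]; last by exists u.
have [w [_ hw]] := dist_down hu; exact: (IH w).
Qed.

Lemma layer4 : k_connected e 4 ->
  forall i u, 0 < i -> i < D u -> 4 <= #|[set w | D w == i]|.
Proof.
move=> [_ hk] i u hi hu; rewrite leqNgt; apply/negP => hS.
have hu' : u \notin [set w | D w == i] by rewrite inE gtn_eqF.
have hv' : v \notin [set w | D w == i] by rewrite inE dist_v eq_sym gtn_eqF.
have hc := hk _ hS u v hu' hv'.
have hcl : closed [rel a b | [&& e a b, a \notin [set w | D w == i] & b \notin [set w | D w == i]]]
             [pred a | i < D a].
  move=> a b /= /and3P [hab ha hb]; rewrite !inE in ha hb *.
  have h1 := dist_adj hab.
  have h2 : D b <= (D a).+1 by apply: dist_adj; rewrite esym.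
  by apply/idP/idP; lia.
by have := closed_connect hcl hc; rewrite !inE hu dist_v.
Qed.

Lemma rot_inj rot u a a' : rotation_system e rot -> e u a -> e u a' ->
  rot u a = rot u a' -> a = a'.
Proof.
move=> hr ha ha' heq.
have hc := (hr u a ha).1.
have h1 := (hr u _ hc).2 a ha.
have h2 := (hr u _ hc).2 a' ha'.
have e1 := iter_findex h1; have e2 := iter_findex h2.
move: e1 e2; set c := rot u a; set k := findex _ _ _; set k' := findex _ _ _ => e1 e2.
have f1 : iter k.+1 (rot u) c = c by rewrite iterS e1.
have f2 : iter k'.+1 (rot u) c = c by rewrite iterS e2 -heq.
rewrite -e1 -e2.
transitivity (iter k (rot u) (iter k'.+1 (rot u) c)); first by rewrite f2.
rewrite -iterD.
have -> : (k + k'.+1 = k' + k.+1)%N by lia.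
by rewrite iterD f1.
Qed.

Lemma fp_darts rot d : rotation_system e rot -> d \in darts e ->
  face_perm rot d \in darts e.
Proof.
move=> hr; rewrite !inE /face_perm /= => hd.
by apply: (hr _ _ _).1; rewrite esym.
Qed.

Lemma fp_inj rot d d' : rotation_system e rot -> d \in darts e -> d' \in darts e ->
  face_perm rot d = face_perm rot d' -> d = d'.
Proof.
move=> hr; case: d => a b; case: d' => a' b'; rewrite !inE /face_perm /= => hd hd' [eb er].
subst b'; congr (_, _); apply: (rot_inj hr _ _ er); by rewrite esym.
Qed.

Lemma layer2 rot : rotation_system e rot -> faces_are_cycles e rot 4 ->
  forall i u, 0 < i -> i < D u -> 2 <= #|[set w | D w == i]|.
Proof.
move=> hr hf i u hi hu; rewrite leqNgt; apply/negP => hS.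
case: i hi hu hS => // j _ hu hS.
have [w hw] := dist_level (ltnW hu).
have huniq : forall w', D w' = j.+1 -> w' = w.
  move=> w' hw'; case: (eqVneq w' w) => // hne.
  move: hS; rewrite ltnS leqNgt => /negP; case; apply/card_gt1P.
  by exists w', w; rewrite !inE hw hw' !eqxx.
have [b hb] := dist_level hu.
have [w' [hbw' hw']] := dist_down hb.
have ewb : e w b by rewrite esym -(huniq _ hw').
have [a [hwa ha]] := dist_down hw.
have nbr : forall z, e w z -> D z = j \/ D z = j.+2.
  move=> z hz.
  have h1 : D z <= (D w).+1 by apply: dist_adj; rewrite esym.
  have h2 := dist_adj hz.
  have h3 : D z != j.+1.
    apply/negP => /eqP /huniq hzw; subst z; by rewrite eirr in hz.
  rewrite hw in h1 h2; lia.
have hin : forall k, e w (iter k (rot w) a).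
  elim=> [|k IH] //=; exact: (hr _ _ IH).1.
have [x [hx Dx Dy]] : exists x, [/\ e w x, D x = j & D (rot w x) = j.+2].
  have hfc := (hr w a hwa).2 b ewb.
  have := iter_findex hfc; move: (findex _ _ _) => m.
  elim: m b hb {ewb hfc hw' hbw'} => [|m IH] b' hb' /= hm.
    by subst b'; rewrite ha in hb'; lia.
  have := nbr _ (hin m); case=> hDm.
    by exists (iter m (rot w) a); split; rewrite ?hin // hm.
  exact: (IH _ hDm erefl).
have [y ey] : exists y, rot w x = y by eexists.
rewrite ey in Dy.
have ewy : e w y by rewrite -ey; exact: (hr _ _ hx).1.
have [z ez] : exists z, rot y w = z by eexists.
have eyz : e y z by rewrite -ez; apply: (hr _ _ _).1; rewrite esym.
have [p4 ep4] : exists p, rot z y = p by eexists.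
have ezp : e z p4 by rewrite -ep4; apply: (hr _ _ _).1; rewrite esym.
pose f := face_perm rot.
pose d0 := (x, w).
have d0in : d0 \in darts e by rewrite inE /= esym.
pose O := [set d' | fconnect f d0 d'].
have hOin : O \in faces e rot by apply/imsetP; exists d0.
have [hO4 hV4] := hf _ hOin.
have hinj1 : {in O &, injective (fun d : T * T => d.1)}.
  by apply/imset_injP; rewrite hV4 hO4.
have memO : forall k, iter k f d0 \in O by move=> k; rewrite inE fconnect_iter.
have dartsI : forall k, iter k f d0 \in darts e.
  by elim=> [|k IH] //=; apply: fp_darts.
have i1 : iter 1 f d0 = (w, y) by rewrite /= /f /face_perm /= ey.
have i2 : iter 2 f d0 = (y, z) by rewrite iterS i1 /f /face_perm /= ez.
have i3 : iter 3 f d0 = (z, p4) by rewrite iterS i2 /f /face_perm /= ep4.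
have i4 : (iter 4 f d0).1 = p4 by rewrite iterS i3.
have step : forall k l, iter k.+1 f d0 = iter l.+1 f d0 -> iter k f d0 = iter l f d0.
  move=> k l h; apply: (fp_inj hr (dartsI k) (dartsI l)); exact: h.
have fst_eq : forall k l, (iter k f d0).1 = (iter l f d0).1 -> iter k f d0 = iter l f d0.
  move=> k l h; exact: hinj1 (memO k) (memO l) h.
have Dz1 : j.+1 <= D z by have := dist_adj eyz; rewrite Dy.
have hzw : z != w.
  apply/negP => /eqP hzw.
  have h31 : iter 3 f d0 = iter 1 f d0 by apply: fst_eq; rewrite i3 i1.
  have := step _ _ h31; rewrite i2 /= => -[hyx _].
  move: Dy; rewrite hyx Dx => H; exfalso; clear -H; lia.
have Dz2 : j.+2 <= D z.
  rewrite ltn_neqAle Dz1 andbT; apply/negP => /eqP hz.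
  by move/eqP: hzw; apply; apply: huniq.
have hzx : z != x by apply/negP => /eqP hzx; move: Dz2; rewrite hzx Dx => H; clear -H; lia.
have hzy : z != y by apply/negP => /eqP hzy; move: eyz; rewrite hzy eirr.
have hxw : x != w by apply/negP => /eqP hxw; move: Dx; rewrite hxw hw => H; exfalso; clear -H; lia.
have hxy : x != y by apply/negP => /eqP hxy; move: Dx; rewrite hxy Dy => H; exfalso; clear -H; lia.
have hwy : w != y by apply/negP => /eqP hwy; move: hw; rewrite hwy Dy => H; exfalso; clear -H; lia.
have hV : forall k, (iter k f d0).1 \in [set d.1 | d in O].
  by move=> k; apply: imset_f.
have hp4 : p4 \in [:: x; w; y; z].
  apply/negP => hn.
  have hu5 : uniq [:: x; w; y; z; p4].
    move/negP: hn; rewrite /= !inE !negb_or => /andP [h1 /andP [h2 /andP [h3 h4]]].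
    have hxz : x != z by rewrite eq_sym.
    have hwz : w != z by rewrite eq_sym.
    have hyz : y != z by rewrite eq_sym.
    have h1' : x != p4 by rewrite eq_sym.
    have h2' : w != p4 by rewrite eq_sym.
    have h3' : y != p4 by rewrite eq_sym.
    have h4' : z != p4 by rewrite eq_sym.
    by repeat (apply/andP; split).
  have hsub : mem [:: x; w; y; z; p4] \subset mem [set d.1 | d in O].
    apply/subsetP => q; rewrite !inE => /orP [/eqP -> | /orP [/eqP -> | /orP [/eqP -> | /orP [/eqP -> | /eqP ->]]]].
    - by have := hV 0.
    - by have := hV 1; rewrite i1.
    - by have := hV 2; rewrite i2.
    - by have := hV 3; rewrite i3.
    - by have := hV 4; rewrite i4.
  have := subset_leq_card hsub.
  rewrite (card_uniqP hu5) hV4.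
  match goal with |- ?g => idtac g end.
  by [].
move: hp4; rewrite !inE => /orP [/eqP hp | /orP [/eqP hp | /orP [/eqP hp | /eqP hp]]].
- have := dist_adj ezp; rewrite hp Dx => H; exfalso; clear -H Dz2; lia.
- have h41 : iter 4 f d0 = iter 1 f d0 by apply: fst_eq; rewrite i4 i1.
  have := step _ _ h41; rewrite i3 /= => -[hzx' _].
  by move/eqP: hzx.
- have h42 : iter 4 f d0 = iter 2 f d0 by apply: fst_eq; rewrite i4 i2.
  have := step _ _ h42; rewrite i3 i1 => -[hzw' _].
  by move/eqP: hzw.
- by move: ezp; rewrite hp eirr.
Qed.

End Dist.

Lemma sum_ltn_min d N : \sum_(k < N) (k < d : nat) = minn d N.
Proof.
elim: N => [|N IH]; first by rewrite big_ord0; lia.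
rewrite big_ord_recr /= IH.
case: (ltnP N d) => h /=; lia.
Qed.

Lemma sum_ltn d N : d <= N -> \sum_(k < N) (k < d : nat) = d.
Proof. by move=> h; rewrite sum_ltn_min; lia. Qed.

Lemma sumb_card (T : finType) (P : pred T) : \sum_u (P u : nat) = #|[set u | P u]|.
Proof.
rewrite -sum1_card [RHS]big_mkcond; apply: eq_bigr => u _; rewrite inE; by case: (P u).
Qed.

Section Count.
Variables (T : finType) (c : nat) (D : T -> nat) (v : T).
Hypothesis hv : D v = 0.
Hypothesis hlay : forall i u, 0 < i -> i < D u -> c <= #|[set w | D w == i]|.
Hypothesis hD : forall u, D u <= #|T|.

Lemma count_below k u : 0 < k -> k <= D u -> 1 + c * (k - 1) <= #|[set w | D w < k]|.
Proof.
elim: k u => [|k IH] u // _ hk.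
case: k IH hk => [|k] IH hk.
  rewrite muln0 addn0; apply/card_gt0P; exists v; by rewrite inE hv.
have -> : [set w | D w < k.+2] = [set w | D w < k.+1] :|: [set w | D w == k.+1].
  by apply/setP => w; rewrite !inE ltnS leq_eqVlt orbC.
have hI : [set w | D w < k.+1] :&: [set w | D w == k.+1] = set0.
  by apply/setP => w; rewrite !inE; case: (ltngtP (D w) k.+1).
have := cardsUI [set w | D w < k.+1] [set w | D w == k.+1].
rewrite hI cards0 addn0 => ->.
have h1 := IH u erefl (ltnW hk).
have h2 := hlay (ltn0Sn k) hk.
move: h1 h2; rewrite !subSS subn0; lia.
Qed.

Lemma count_above k : #|[set u | k < D u]| <= #|T| - 1 - c * k.
Proof.
case: (boolP [exists u, k < D u]) => [/existsP [u hu]|hn].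
  have := count_below (ltn0Sn k) hu; rewrite subSS subn0 => h.
  have := cardsC [set w | D w < k.+1].
  have -> : ~: [set w | D w < k.+1] = [set u | k < D u].
    by apply/setP => w; rewrite !inE ltnS -ltnNge.
  lia.
have -> : [set u | k < D u] = set0.
  apply/setP => u; rewrite !inE; apply/negbTE; apply/negP => hu.
  by move/negP: hn; apply; apply/existsP; exists u.
by rewrite cards0.
Qed.

Lemma sum_bound : \sum_u D u <= \sum_(k < #|T|) (#|T| - 1 - c * k).
Proof.
rewrite (eq_bigr (fun u => \sum_(k < #|T|) (k < D u : nat))); last first.
  by move=> u _; rewrite sum_ltn.
rewrite exchange_big /=; apply: leq_sum => k _.
by rewrite sumb_card count_above.
Qed.

End Count.

Definition H (c n : nat) := \sum_(k < n) (n - 1 - c * k).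

Lemma H_widen c n N : 0 < c -> n <= N -> \sum_(k < N) (n - 1 - c * k) = H c n.
Proof.
move=> hc; elim: N => [|N IH] h; first by case: n h.
case: (leqP n N) => hnN; last by have -> : n = N.+1 by lia.
rewrite big_ord_recr /= IH //.
have -> : n - 1 - c * N = 0.
  have : N <= c * N by rewrite leq_pmull.
  lia.
by rewrite addn0.
Qed.

Lemma H_rec c n : 0 < c -> H c (n + c) = n + c - 1 + H c n.
Proof.
move=> hc; rewrite /H.
case: c hc => // c _.
rewrite addnS big_ord_recl /=.
rewrite muln0 subn0; congr (_ + _); try lia.
rewrite -/(H c.+1 n) -(@H_widen c.+1 n (n + c) (ltn0Sn c) (leq_addr c n)).
apply: eq_bigr => k _; rewrite /bump /= add1n mulnS.
by move: (c.+1 * k) => m; lia.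
Qed.

Lemma H_quad n : 4 * H 2 n + odd n <= n * n.
Proof.
elim/ltn_ind: n => n IH.
case: n IH => [|[|n]] IH; first by rewrite /H big_ord0.
  by rewrite /H big_ord_recl big_ord0.
have := IH n (ltn_trans (ltnSn n) (ltnSn n.+1)); rewrite -[n.+2]addn2 H_rec //=.
rewrite oddD /=. lia.
Qed.

Definition rtri (n : nat) := if n %% 4 == 1 then 0 else if n %% 4 == 3 then 4 else 3.

Lemma H_tri n : 8 * H 4 n <= (n + 3) * (n - 1) + rtri n.
Proof.
elim/ltn_ind: n => n IH.
case: n IH => [|[|[|[|n]]]] IH; try by rewrite /H /rtri ?big_ord_recl big_ord0.
have := IH n (ltn_trans (ltnSn n) (ltn_trans (ltnSn _) (ltn_trans (ltnSn _) (ltnSn _)))).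
rewrite -[n.+4]addn4 H_rec // /rtri.
have -> : (n + 4) %% 4 = n %% 4 by rewrite addnC -modnDml modnn.
clear IH; case: n => [|n]; first by rewrite /H big_ord0.
move: (H 4 _) (if _ then _ else _) => h r.
have -> : n.+1 + 4 + 3 = n + 8 by lia.
have -> : n.+1 + 4 - 1 = n + 4 by lia.
have -> : n.+1 + 3 = n + 4 by lia.
have -> : n.+1 - 1 = n by lia.
nia.
Qed.

Local Open Scope ring_scope.

Lemma eps_quad_ge0 n : 0 <= eps_quad n.
Proof. rewrite /eps_quad; case: ifP => _ //; apply: divr_ge0 => //; apply: mulr_ge0 => //. Qed.

Lemma eps_tri_ge0 n : 0 <= eps_tri n.
Proof.
rewrite /eps_tri; case: ifP => _ //; case: ifP => _ //; apply: divr_ge0 => //; apply: mulr_ge0 => //.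
Qed.

Lemma nz1 (m : nat) : (1 + m%:R : rat) != 0.
Proof. rewrite gt_eqF //; have := ler0n rat m; lra. Qed.

Lemma rat_quad (s n : nat) : (4 * s + odd n <= n * n)%N ->
  (s%:R / (n.-1)%:R : rat) <= (n%:R + 1) / 4 + eps_quad n.
Proof.
move=> h.
case: n h => [|n] h.
  rewrite /= invr0 mulr0; have := eps_quad_ge0 0; lra.
case: n h => [|m] h.
  rewrite /= invr0 mulr0; have := eps_quad_ge0 1; lra.
rewrite /= ler_pdivrMr ?ltr0Sn //.
have hm : (0 : rat) < m.+1%:R by rewrite ltr0Sn.
have hN : (m.+2%:R : rat) = m.+1%:R + 1 by rewrite -addn1 natrD.
rewrite hN.
have h' : 4%:R * (s%:R : rat) + (odd m.+2)%:R <= (m.+1%:R + 1) * (m.+1%:R + 1).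
  by rewrite -hN -!natrM -natrD ler_nat.
move: h'; rewrite /eps_quad; case: (odd m.+2) => /= h'.
  rewrite addr0; nra.
have -> : 1 / (4 * (m.+1)%:R) = (1 / 4) / (m.+1%:R : rat).
  by field; apply: nz1.
rewrite mulrDl divfK ?gt_eqF //; nra.
Qed.

Lemma rat_tri (s n : nat) : (8 * s <= (n + 3) * (n - 1) + rtri n)%N ->
  (s%:R / (n.-1)%:R : rat) <= (n%:R + 3) / 8 + eps_tri n.
Proof.
move=> h.
case: n h => [|n] h.
  rewrite /= invr0 mulr0; have := eps_tri_ge0 0; lra.
case: n h => [|m] h.
  rewrite /= invr0 mulr0; have := eps_tri_ge0 1; lra.
rewrite /= ler_pdivrMr ?ltr0Sn //.
have hm : (0 : rat) < m.+1%:R by rewrite ltr0Sn.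
have hN : (m.+2%:R : rat) = m.+1%:R + 1 by rewrite -addn1 natrD.
rewrite hN.
have e1 : ((m.+2 + 3) * (m.+2 - 1) = (m.+1 + 4) * m.+1)%N by rewrite subn1 /=; lia.
rewrite e1 in h.
have h' : 8%:R * (s%:R : rat) <= (m.+1%:R + 4%:R) * m.+1%:R + (rtri m.+2)%:R.
  by rewrite -natrD -!natrM -natrD ler_nat.
move: h'; rewrite /eps_tri /rtri; case: ifP => _ /= h'.
  rewrite addr0; nra.
case: ifP => _ /= in h' *.
  have -> : 1 / (2 * (m.+1)%:R) = (1 / 2) / (m.+1%:R : rat).
    by field; apply: nz1.
  rewrite mulrDl divfK ?gt_eqF //; nra.
have -> : 3 / (8 * (m.+1)%:R) = (3 / 8) / (m.+1%:R : rat).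
  by field; apply: nz1.
rewrite mulrDl divfK ?gt_eqF //; nra.
Qed.

Theorem mainTheorem1 :
  (forall (T : finType) (e : rel T),
      simple_triangulation e -> k_connected e 4 ->
      remoteness e <= (#|T|%:R + 3) / 8 + eps_tri #|T|) /\
  (forall (T : finType) (e : rel T),
      simple_quadrangulation e ->
      remoteness e <= (#|T|%:R + 1) / 4 + eps_quad #|T|).
Proof.
split.
- move=> T e [[es ei] [rot [[hr hconn _] _]]] hk.
  rewrite /remoteness; apply/bigmax_leP; split.
    by have := ler0n rat #|T|; have := eps_tri_ge0 #|T|; lra.
  move=> v _; apply: rat_tri.
  have hlay : forall i u, (0 < i)%N -> (i < dist e u v)%N ->
      (4 <= #|[set w | dist e w v == i]|)%N by apply: layer4.
  have hD : forall u, (dist e u v <= #|T|)%N by move=> u; apply: dist_leT.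
  have hs := @sum_bound T 4 (fun u => dist e u v) v (dist_v e v) hlay hD.
  have ht := H_tri #|T|.
  rewrite /sigma; move: hs ht; rewrite /H.
  move: (\sum_u _)%N (\sum_(k < _) _)%N => s1 s2; lia.
- move=> T e [[es ei] [rot [[hr hconn _] hfc]]].
  rewrite /remoteness; apply/bigmax_leP; split.
    by have := ler0n rat #|T|; have := eps_quad_ge0 #|T|; lra.
  move=> v _; apply: rat_quad.
  have hlay : forall i u, (0 < i)%N -> (i < dist e u v)%N ->
      (2 <= #|[set w | dist e w v == i]|)%N by move=> i u; apply: (@layer2 T e v es ei hconn rot hr hfc).
  have hD : forall u, (dist e u v <= #|T|)%N by move=> u; apply: dist_leT.
  have hs := @sum_bound T 2 (fun u => dist e u v) v (dist_v e v) hlay hD.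
  have ht := H_quad #|T|.
  rewrite /sigma; move: hs ht; rewrite /H.
  move: (\sum_u _)%N (\sum_(k < _) _)%N => s1 s2; lia.
Qed.
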